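(* Let $n\ge 2$ and $1\le k\le n-1$. Let $L\in\mathbb{R}^{n\times n}$ be the Laplacian matrix of an undirected weighted graph on $n$ nodes, with eigenvalues $\lambda_1(L)\le\lambda_2(L)\le\cdots\le\lambda_n(L)$ and an associated orthonormal family of real eigenvectors $v_1(L),\dots,v_n(L)$. Let $g_1(s),\dots,g_n(s)$ and $f(s)$ be scalar transfer functions, $G(s)=\mathrm{diag}\{g_i(s)\}_{i=1}^n$, and define $$T_{yu}(s)=(I_n+G(s)f(s)L)^{-1}G(s),\qquad T_k(s)=V_k\big(V_k^TG^{-1}(s)V_k+f(s)\Lambda_k\big)^{-1}V_k^T,$$ where $V_k=[v_1(L)\ \cdots\ v_k(L)]$ and $\Lambda_k=\mathrm{diag}\{\lambda_i(L)\}_{i=1}^k$. Let $s_0\in\mathbb{C}$ be a point that is not a pole of $f(s)$ and such that the two quantities $$M_1:=\|T_k(s_0)\|,\qquad M_2:=\max_{1\le i\le n}|g_i^{-1}(s_0)|$$ are finite. Then whenever $|f(s_0)|\,\lambda_{k+1}(L)>M_2+M_1M_2^2$, the following inequality holds: $$\|T_{yu}(s_0)-T_k(s_0)\|\le\frac{(M_1M_2+1)^2}{|f(s_0)|\,\lambda_{k+1}(L)-M_2-M_1M_2^2}.$$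
   Context: $\|\cdot\|$ denotes the spectral norm of a matrix. $T_{yu}(s)$ is the transfer matrix from input $u$ to output $y$ of the feedback interconnection of the nodal dynamics $G(s)$ with the network coupling $f(s)L$ (negative feedback). $\lambda_i(L)$ denotes the $i$-th smallest eigenvalue of $L$. *)

(* Defs.v *)
From mathcomp Require Import all_boot all_order all_algebra.
From mathcomp Require Import classical_sets reals.
From mathcomp Require Export complex.
Set Implicit Arguments. Unset Strict Implicit. Unset Printing Implicit Defensive.
Import Order.TTheory GRing.Theory Num.Theory.
Local Open Scope ring_scope.

Definition cabs (R : realType) (z : R[i]) : R := ComplexField.Normc.normc z.

Definition cvnorm (R : realType) (n : nat) (x : 'cV[R[i]]_n) : R :=
  Num.sqrt (\sum_(i < n) (cabs (x i 0)) ^+ 2).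

Definition specnorm (R : realType) (m n : nat) (A : 'M[R[i]]_(m, n)) : R :=
  sup [set cvnorm (A *m x) | x in [set x : 'cV[R[i]]_n | cvnorm x = 1]].

Definition toCmx (R : realType) (m n : nat) (A : 'M[R]_(m, n)) : 'M[R[i]]_(m, n) :=
  map_mx (fun r => (r%:C)%C) A.

Definition is_graph_laplacian (R : realType) (n : nat) (L : 'M[R]_n) : Prop :=
  exists W : 'M[R]_n,
    [/\ W^T = W, (forall i j, 0 <= W i j), (forall i, W i i = 0) &
        L = \matrix_(i, j) ((i == j)%:R * (\sum_(l < n) W i l) - W i j)].

(* lam is the nondecreasing list of eigenvalues of L, and the columns of the
   orthogonal matrix V form an associated orthonormal family of eigenvectors
   (column i of V is v_{i+1}(L), lam i is lambda_{i+1}(L); 0-based). *)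
Definition ordered_eigendecomp (R : realType) (n : nat) (L : 'M[R]_n)
    (lam : 'I_n -> R) (V : 'M[R]_n) : Prop :=
  [/\ (forall i j : 'I_n, (i <= j)%N -> lam i <= lam j),
      V^T *m V = 1%:M &
      (forall i : 'I_n, L *m col i V = lam i *: col i V)].

Definition firstcols (R : Type) (n k : nat) (hk : (k <= n)%N) (V : 'M[R]_n)
  : 'M[R]_(n, k) := \matrix_(i, j) V i (widen_ord hk j).

(* Main.v *)
Require Import Defs.
From mathcomp Require Import all_boot all_order all_algebra.
From mathcomp Require Import classical_sets reals complex.
From mathcomp Require Import ring lra.
Import Order.TTheory GRing.Theory Num.Theory.
Local Open Scope ring_scope.

Section Norms.
Context {R : realType}.
Local Notation C := R[i].
Local Notation rc x := ((x : R)%:C%C : C).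

Lemma cabs_ge0 (z : C) : 0 <= cabs z.
Proof. by case: z => a b; rewrite /cabs /=; apply: sqrtr_ge0. Qed.

Lemma cabsM (x y : C) : cabs (x * y) = cabs x * cabs y.
Proof. exact: ComplexField.Normc.normcM. Qed.

Lemma cabs_eq0 (z : C) : cabs z = 0 -> z = 0.
Proof. exact: ComplexField.Normc.eq0_normc. Qed.

Lemma cabs0 : cabs (0 : C) = 0.
Proof. exact: ComplexField.Normc.normc0. Qed.

Lemma cabsD (x y : C) : cabs (x + y) <= cabs x + cabs y.
Proof. exact: le_normcD. Qed.

Lemma cabsN (x : C) : cabs (- x) = cabs x.
Proof. exact: normcN. Qed.

Lemma cabs_real (r : R) : cabs (rc r) = `|r|.
Proof. by rewrite /cabs /= expr0n /= addr0 sqrtr_sqr. Qed.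

Lemma cabs_sum (I : finType) (F : I -> C) : cabs (\sum_i F i) <= \sum_i cabs (F i).
Proof.
elim/big_ind2: _ => //; first by rewrite cabs0.
move=> x1 x2 y1 y2 h1 h2; apply: le_trans (cabsD _ _) _; exact: lerD.
Qed.

Lemma conj_mul_cabs (z : C) : (z^* * z)%C = rc (cabs z ^+ 2).
Proof.
case: z => a b; rewrite /cabs /= sqr_sqrtr ?addr_ge0 ?sqr_ge0 //.
by congr Complex; ring.
Qed.

Lemma cvnorm_ge0 {n} (x : 'cV[C]_n) : 0 <= cvnorm x.
Proof. exact: sqrtr_ge0. Qed.

Lemma cvnorm_sq {n} (x : 'cV[C]_n) : cvnorm x ^+ 2 = \sum_i cabs (x i 0) ^+ 2.
Proof. by rewrite sqr_sqrtr // sumr_ge0 // => i _; rewrite sqr_ge0. Qed.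

Lemma cvnorm_le {n} (x y : 'cV[C]_n) :
  (forall i, cabs (x i 0) <= cabs (y i 0)) -> cvnorm x <= cvnorm y.
Proof.
move=> h; rewrite /cvnorm ler_sqrt; last by rewrite sumr_ge0 // => i _; rewrite sqr_ge0.
apply: ler_sum => i _; rewrite ler_pXn2r // ?nnegrE ?cabs_ge0 //.
Qed.

Lemma cvnormZ {n} (c : C) (x : 'cV[C]_n) : cvnorm (c *: x) = cabs c * cvnorm x.
Proof.
rewrite /cvnorm.
under eq_bigr => i _ do rewrite mxE cabsM exprMn.
rewrite -mulr_sumr sqrtrM ?sqr_ge0 // sqrtr_sqr ger0_norm //; exact: cabs_ge0.
Qed.

Lemma cvnorm0 n : cvnorm (0 : 'cV[C]_n) = 0.
Proof. by rewrite -(scale0r (0 : 'cV[C]_n)) cvnormZ cabs0 mul0r. Qed.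

Lemma cvnormN {n} (x : 'cV[C]_n) : cvnorm (- x) = cvnorm x.
Proof.
rewrite -scaleN1r cvnormZ cabsN.
by rewrite (_ : cabs 1 = 1) ?mul1r //; exact: ComplexField.Normc.normc1.
Qed.

Lemma cvnorm_eq0 {n} (x : 'cV[C]_n) : cvnorm x = 0 -> x = 0.
Proof.
move=> /eqP; rewrite sqrtr_eq0 => hle.
have h0 : \sum_i cabs (x i 0) ^+ 2 = 0.
  by apply/eqP; rewrite eq_le hle sumr_ge0 // => i _; rewrite sqr_ge0.
apply/matrixP => i j; rewrite ord1 mxE.
move/psumr_eq0P: h0 => /(_ (fun i _ => sqr_ge0 _) i isT) /eqP.
by rewrite expf_eq0 /= => /eqP /cabs_eq0.
Qed.

Lemma lagrange {n} (a b : 'I_n -> R) :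
  \sum_i \sum_j (a i * b j - a j * b i) ^+ 2 =
  2 * ((\sum_i a i ^+ 2) * (\sum_i b i ^+ 2)) - 2 * (\sum_i a i * b i) ^+ 2.
Proof.
have e : forall i j, (a i * b j - a j * b i) ^+ 2 =
   a i ^+ 2 * b j ^+ 2 + b i ^+ 2 * a j ^+ 2 - 2 * ((a i * b i) * (a j * b j)).
  by move=> i j; ring.
under eq_bigr => i _ do under eq_bigr => j _ do rewrite e.
under eq_bigr => i _ do rewrite sumrB big_split /= -!mulr_sumr.
rewrite sumrB big_split /= -!mulr_suml -mulr_sumr -mulr_suml.
rewrite [(\sum_i b i ^+ 2) * _]mulrC; ring.
Qed.

Lemma cs_real {n} (a b : 'I_n -> R) :
  \sum_i a i * b i <= Num.sqrt (\sum_i a i ^+ 2) * Num.sqrt (\sum_i b i ^+ 2).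
Proof.
have ha : 0 <= \sum_i a i ^+ 2 by rewrite sumr_ge0 // => i _; rewrite sqr_ge0.
have hb : 0 <= \sum_i b i ^+ 2 by rewrite sumr_ge0 // => i _; rewrite sqr_ge0.
have hl := lagrange a b.
have h0 : 0 <= \sum_i \sum_j (a i * b j - a j * b i) ^+ 2.
  by rewrite sumr_ge0 // => i _; rewrite sumr_ge0 // => j _; rewrite sqr_ge0.
rewrite -sqrtrM //.
apply: le_trans (ler_norm _) _.
rewrite -sqrtr_sqr ler_sqrt; last by rewrite mulr_ge0.
lra.
Qed.

Lemma cvnormD {n} (x y : 'cV[C]_n) : cvnorm (x + y) <= cvnorm x + cvnorm y.
Proof.
pose a i := cabs (x i 0); pose b i := cabs (y i 0).
have h1 : cvnorm (x + y) <= Num.sqrt (\sum_i (a i + b i) ^+ 2).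
  rewrite /cvnorm ler_sqrt; last by rewrite sumr_ge0 // => i _; rewrite sqr_ge0.
  apply: ler_sum => i _; rewrite mxE ler_pXn2r ?nnegrE ?cabs_ge0 ?addr_ge0 ?cabs_ge0 //.
  exact: cabsD.
apply: le_trans h1 _.
have hs : \sum_i (a i + b i) ^+ 2 =
   \sum_i a i ^+ 2 + \sum_i b i ^+ 2 + 2 * \sum_i a i * b i.
  rewrite mulr_sumr -!big_split /=; apply: eq_bigr => i _; ring.
have hcs := cs_real a b.
have hA := cvnorm_sq x; have hB := cvnorm_sq y.
rewrite -/(cvnorm x) -/(cvnorm y) in hcs.
have ge0x := cvnorm_ge0 x; have ge0y := cvnorm_ge0 y.
rewrite -[cvnorm x + cvnorm y]ger0_norm ?addr_ge0 // -sqrtr_sqr ler_sqrt ?sqr_ge0 //.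
rewrite hs -/a -/b.
have -> : \sum_i a i ^+ 2 = cvnorm x ^+ 2 by rewrite hA.
have -> : \sum_i b i ^+ 2 = cvnorm y ^+ 2 by rewrite hB.
nra.
Qed.

Lemma cvnormB {n} (x y : 'cV[C]_n) : cvnorm (x - y) <= cvnorm x + cvnorm y.
Proof. by rewrite -(cvnormN y); exact: cvnormD. Qed.


Definition cm {m p} (A : 'M[C]_(m, p)) := map_mx (@conjc R) A.
Definition dotm {m} (x y : 'cV[C]_m) : 'M[C]_1 := (cm x)^T *m y.

Lemma cm_toC {m p} (M : 'M[R]_(m, p)) : cm (toCmx M) = toCmx M.
Proof. by apply/matrixP => i j; rewrite !mxE conjc_real. Qed.

Lemma cmM {m p q} (A : 'M[C]_(m, p)) (B : 'M[C]_(p, q)) : cm (A *m B) = cm A *m cm B.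
Proof. exact: map_mxM. Qed.

Lemma cm0 {m p} : cm (0 : 'M[C]_(m, p)) = 0.
Proof. exact: map_mx0. Qed.

Lemma toC_tr {m p} (M : 'M[R]_(m, p)) : (toCmx M)^T = toCmx M^T.
Proof. by rewrite /toCmx map_trmx. Qed.

Lemma toCM {m p q} (A : 'M[R]_(m, p)) (B : 'M[R]_(p, q)) :
  toCmx (A *m B) = toCmx A *m toCmx B.
Proof. exact: map_mxM. Qed.

Lemma toC1 {m} : toCmx (1%:M : 'M[R]_m) = 1%:M.
Proof. exact: map_mx1. Qed.

Lemma dotm_self {m} (x : 'cV[C]_m) : dotm x x 0 0 = rc (cvnorm x ^+ 2).
Proof.
rewrite cvnorm_sq rmorph_sum /dotm !mxE; apply: eq_bigr => i _.
by rewrite !mxE conj_mul_cabs.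
Qed.

Lemma sq_inj (a b : R) : 0 <= a -> 0 <= b -> a ^+ 2 = b ^+ 2 -> a = b.
Proof.
move=> ha hb e; rewrite -(ger0_norm ha) -(ger0_norm hb) -!sqrtr_sqr e //.
Qed.

Lemma iso_norm {m p} (M : 'M[R]_(m, p)) (x : 'cV[C]_p) :
  M^T *m M = 1%:M -> cvnorm (toCmx M *m x) = cvnorm x.
Proof.
move=> hM; apply: sq_inj; rewrite ?cvnorm_ge0 //.
apply: (@complexI R); rewrite -!dotm_self /dotm cmM cm_toC trmx_mul mulmxA.
by rewrite -(mulmxA _ _ (toCmx M)) toC_tr -toCM hM toC1 mulmx1.
Qed.

Lemma pythag {m} (p q : 'cV[C]_m) : dotm p q = 0 -> dotm q p = 0 ->
  cvnorm (p + q) ^+ 2 = cvnorm p ^+ 2 + cvnorm q ^+ 2.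
Proof.
move=> h1 h2; apply: (@complexI R); rewrite rmorphD /= -!dotm_self.
rewrite /dotm /cm map_mxD (raddfD (@trmx C m 1)) mulmxDl !mulmxDr.
rewrite -/(cm p) -/(cm q) -/(dotm p q) -/(dotm q p) h1 h2.
by rewrite !mxE addr0 add0r.
Qed.

Lemma orth_real {m k} (Vr : 'M[R]_(m, k)) (w : 'cV[C]_k) (q : 'cV[C]_m) :
  (toCmx Vr)^T *m q = 0 ->
  dotm (toCmx Vr *m w) q = 0 /\ dotm q (toCmx Vr *m w) = 0.
Proof.
move=> h; split.
  by rewrite /dotm cmM cm_toC trmx_mul -mulmxA h mulmx0.
have e : (cm q)^T *m toCmx Vr = ((toCmx Vr)^T *m cm q)^T by rewrite trmx_mul trmxK.
have e2 : (toCmx Vr)^T *m cm q = 0.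
  by rewrite toC_tr -(cm_toC Vr^T) -cmM -toC_tr h cm0.
by rewrite /dotm mulmxA e e2 trmx0 mul0mx.
Qed.


Lemma VcTVc {m k} (Vr : 'M[R]_(m, k)) : Vr^T *m Vr = 1%:M ->
  (toCmx Vr)^T *m toCmx Vr = 1%:M.
Proof. by move=> h; rewrite toC_tr -toCM h toC1. Qed.

Lemma projT0 {m k} (Vr : 'M[R]_(m, k)) (v : 'cV[C]_m) : Vr^T *m Vr = 1%:M ->
  (toCmx Vr)^T *m (v - toCmx Vr *m ((toCmx Vr)^T *m v)) = 0.
Proof.
move=> h; rewrite mulmxBr (mulmxA (toCmx Vr)^T (toCmx Vr)) VcTVc // mul1mx subrr //.
Qed.

Lemma proj_norms {m k} (Vr : 'M[R]_(m, k)) (v : 'cV[C]_m) : Vr^T *m Vr = 1%:M ->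
  cvnorm ((toCmx Vr)^T *m v) <= cvnorm v /\
  cvnorm (v - toCmx Vr *m ((toCmx Vr)^T *m v)) <= cvnorm v.
Proof.
move=> h.
set w := (toCmx Vr)^T *m v; set q := v - toCmx Vr *m w.
have [o1 o2] := orth_real Vr w q (projT0 Vr v h).
have py := pythag _ _ o1 o2.
have ev : toCmx Vr *m w + q = v by rewrite /q addrC subrK.
rewrite ev (iso_norm Vr w h) in py.
have g1 := cvnorm_ge0 w; have g2 := cvnorm_ge0 q; have g3 := cvnorm_ge0 v.
split; rewrite -(ler_pXn2r (n := 2)) ?nnegrE //; rewrite py; 
  [rewrite lerDl | rewrite lerDr]; exact: sqr_ge0.
Qed.

Lemma coord_le1 {m} (x : 'cV[C]_m) i : cvnorm x = 1 -> cabs (x i 0) <= 1.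
Proof.
move=> h; have := cvnorm_sq x; rewrite h expr1n => hs.
have : cabs (x i 0) ^+ 2 <= 1.
  rewrite hs (bigD1 i) //= lerDl sumr_ge0 // => j _; exact: sqr_ge0.
by move=> h2; rewrite -(ler_pXn2r (n := 2)) ?nnegrE ?cabs_ge0 // expr1n.
Qed.

Lemma specnorm_bounded {m p} (A : 'M[C]_(m, p)) :
  has_ubound [set cvnorm (A *m x) | x in [set x : 'cV[C]_p | cvnorm x = 1]].
Proof.
exists (cvnorm (\col_i rc (\sum_j cabs (A i j)))).
move=> _ [x hx <-]; apply: cvnorm_le => i.
rewrite !mxE cabs_real ger0_norm; last by rewrite sumr_ge0 // => j _; exact: cabs_ge0.
apply: le_trans (cabs_sum _ _) _; apply: ler_sum => j _.
rewrite cabsM -{2}(mulr1 (cabs (A i j))); apply: ler_wpM2l; first exact: cabs_ge0.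
exact: coord_le1.
Qed.

Lemma normalize {m} (x : 'cV[C]_m) : x != 0 ->
  cvnorm (rc (cvnorm x)^-1 *: x) = 1.
Proof.
move=> hx; have hn : cvnorm x != 0 by apply: contra hx => /eqP /cvnorm_eq0 ->.
rewrite cvnormZ cabs_real ger0_norm ?invr_ge0 ?cvnorm_ge0 // mulVf //.
Qed.

Lemma specnorm_ub {m p} (A : 'M[C]_(m, p)) (x : 'cV[C]_p) :
  cvnorm (A *m x) <= specnorm A * cvnorm x.
Proof.
have [->|hx] := eqVneq x 0; first by rewrite mulmx0 !cvnorm0 mulr0.
have hn : 0 < cvnorm x.
  by rewrite lt_def cvnorm_ge0 andbT; apply: contra hx => /eqP /cvnorm_eq0 ->.
have := ub_le_sup (specnorm_bounded A); move=> /(_ _ (ex_intro2 _ _ _ (normalize _ hx) erefl)).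
rewrite -scalemxAr cvnormZ cabs_real ger0_norm ?invr_ge0 ?cvnorm_ge0 // => h.
rewrite -ler_pdivrMr //; rewrite mulrC; exact: h.
Qed.

Lemma specnorm_le {m p} (A : 'M[C]_(m, p)) (c : R) (i0 : 'I_p) :
  (forall x, cvnorm (A *m x) <= c * cvnorm x) -> specnorm A <= c.
Proof.
move=> h; apply: ge_sup.
  have hx : (const_mx 1 : 'cV[C]_p) != 0.
    apply/eqP => /matrixP /(_ i0 0); rewrite !mxE => /eqP; by rewrite oner_eq0.
  by exists (cvnorm (A *m (rc (cvnorm (const_mx 1 : 'cV[C]_p))^-1 *: const_mx 1))), (rc (cvnorm (const_mx 1 : 'cV[C]_p))^-1 *: const_mx 1); [exact: normalize _ hx|].
move=> _ [x hx <-]; have := h x; rewrite hx mulr1 //.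
Qed.

Lemma specnorm_ge0 {m p} (A : 'M[C]_(m, p)) (i0 : 'I_p) : 0 <= specnorm A.
Proof.
have hx : (const_mx 1 : 'cV[C]_p) != 0.
  apply/eqP => /matrixP /(_ i0 0); rewrite !mxE => /eqP; by rewrite oner_eq0.
have := specnorm_ub A (const_mx 1).
have g := cvnorm_ge0 (A *m const_mx 1).
have hn : 0 < cvnorm (const_mx 1 : 'cV[C]_p).
  by rewrite lt_def cvnorm_ge0 andbT; apply: contra hx => /eqP /cvnorm_eq0 ->.
move=> h; have := le_trans g h; rewrite pmulr_lge0 //.
Qed.


End Norms.

Section RealFacts.
Context {R : realType}.

Lemma widen_eq {n k} (hk : (k <= n)%N) (i j : 'I_k) :
  (widen_ord hk i == widen_ord hk j) = (i == j).
Proof. by apply/eqP/eqP => [/(congr1 val) /= /val_inj | ->]. Qed.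

Lemma firstcols_orth {n k} (hk : (k <= n)%N) (V : 'M[R]_n) :
  V^T *m V = 1%:M -> (firstcols hk V)^T *m firstcols hk V = 1%:M.
Proof.
move=> h; apply/matrixP => i j.
have := congr1 (fun M : 'M[R]_n => M (widen_ord hk i) (widen_ord hk j)) h => /=.
rewrite !mxE widen_eq => <-; apply: eq_bigr => l _; by rewrite !mxE.
Qed.

Lemma lap_sym {n} (L : 'M[R]_n) : is_graph_laplacian L -> L^T = L.
Proof.
move=> [W [hW _ _ ->]]; apply/matrixP => i j; rewrite !mxE.
have [->|hij] := eqVneq i j; first by [].
rewrite !mul0r; congr (_ - _).
by have := congr1 (fun M : 'M[R]_n => M i j) hW; rewrite /= mxE => <-.
Qed.

Lemma eig_cols {n} (L : 'M[R]_n) (lam : 'I_n -> R) (V : 'M[R]_n) :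
  (forall i : 'I_n, L *m col i V = lam i *: col i V) ->
  forall i j, (L *m V) i j = lam j * V i j.
Proof.
move=> h i j; have := congr1 (fun M : 'cV[R]_n => M i 0) (h j) => /=.
rewrite !mxE => <-; apply: eq_bigr => l _; by rewrite !mxE.
Qed.

Lemma LVk {n k} (hk : (k <= n)%N) (L : 'M[R]_n) (lam : 'I_n -> R) (V : 'M[R]_n) :
  (forall i : 'I_n, L *m col i V = lam i *: col i V) ->
  L *m firstcols hk V = firstcols hk V *m diag_mx (\row_(j < k) lam (widen_ord hk j)).
Proof.
move=> h; apply/matrixP => i j; rewrite mul_mx_diag !mxE.
rewrite mulrC -(@eig_cols _ _ _ _ h) !mxE; apply: eq_bigr => l _; by rewrite !mxE.
Qed.

Lemma LV {n} (L : 'M[R]_n) (lam : 'I_n -> R) (V : 'M[R]_n) :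
  (forall i : 'I_n, L *m col i V = lam i *: col i V) ->
  L *m V = V *m diag_mx (\row_j lam j).
Proof.
move=> h; apply/matrixP => i j; rewrite mul_mx_diag !mxE mulrC -(@eig_cols _ _ _ _ h) mxE.
by apply: eq_bigr.
Qed.

End RealFacts.

Section Core.
Context {R : realType}.
Local Notation C := R[i].
Local Notation rc x := ((x : R)%:C%C : C).

Lemma core n k (Vr : 'M[R]_(n, k)) (Lc H : 'M[C]_n) (Lk : 'M[C]_k) (f : C)
    (M1 M2 lamk : R) (e : 'cV[C]_n) :
  Vr^T *m Vr = 1%:M ->
  Lc *m toCmx Vr = toCmx Vr *m Lk ->
  (toCmx Vr)^T *m Lc = Lk *m (toCmx Vr)^T ->
  (forall x, cvnorm (H *m x) <= M2 * cvnorm x) ->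
  0 <= M1 -> 0 <= M2 ->
  ((toCmx Vr)^T *m H *m toCmx Vr + f *: Lk) \in unitmx ->
  (forall u, cvnorm (invmx ((toCmx Vr)^T *m H *m toCmx Vr + f *: Lk) *m u)
             <= M1 * cvnorm u) ->
  (forall x, (toCmx Vr)^T *m x = 0 -> lamk * cvnorm x <= cvnorm (Lc *m x)) ->
  (toCmx Vr)^T *m ((H + f *: Lc) *m e) = 0 ->
  (cabs f * lamk - M2 - M1 * M2 ^+ 2) *
     cvnorm ((1%:M - toCmx Vr *m (toCmx Vr)^T) *m e)
   <= cvnorm ((1%:M - toCmx Vr *m (toCmx Vr)^T) *m ((H + f *: Lc) *m e)) /\
  cvnorm e <= (M1 * M2 + 1) * cvnorm ((1%:M - toCmx Vr *m (toCmx Vr)^T) *m e).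
Proof.
move=> hV hLk hLk' hH hM1 hM2 hAu hAinv hlow hNe.
set Vc := toCmx Vr in hLk hLk' hAu hAinv hlow hNe *.
set Ak := (Vc^T *m H *m Vc + f *: Lk) in hAu hAinv.
set P := 1%:M - Vc *m Vc^T.
have PE : forall v : 'cV[C]_n, P *m v = v - Vc *m (Vc^T *m v).
  by move=> v; rewrite /P mulmxBl mul1mx mulmxA.
have Pn : forall v : 'cV[C]_n, cvnorm (P *m v) <= cvnorm v.
  by move=> v; rewrite PE; exact: (proj2 (proj_norms Vr v hV)).
set a := Vc^T *m e.
set e2 := P *m e.
have ee : e = Vc *m a + e2 by rewrite /e2 PE addrC subrK.
have h0 : Vc^T *m e2 = 0 by rewrite /e2 PE; exact: projT0.
have t1 : Vc^T *m (Lc *m e) = Lk *m a by rewrite mulmxA hLk' -mulmxA.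
have t2 : Vc^T *m (H *m e) = Vc^T *m H *m Vc *m a + Vc^T *m (H *m e2).
  by rewrite {1}ee !mulmxDr !mulmxA.
have t3 : (H + f *: Lc) *m e = H *m e + f *: (Lc *m e).
  by rewrite mulmxDl -scalemxAl.
have t4 : Ak *m a = Vc^T *m H *m Vc *m a + f *: (Lk *m a).
  by rewrite mulmxDl -scalemxAl.
have key : Ak *m a + Vc^T *m (H *m e2) = 0.
  rewrite -hNe t3 mulmxDr -scalemxAr t1 t2 t4.
  by rewrite addrAC.
have aE : a = - (invmx Ak *m (Vc^T *m (H *m e2))).
  have : Ak *m a = - (Vc^T *m (H *m e2)) by apply/eqP; rewrite -addr_eq0 key.
  move=> /(congr1 (mulmx (invmx Ak))); rewrite (mulmxA (invmx Ak) Ak) mulVmx // mul1mx => ->.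
  by rewrite mulmxN.
have ha : cvnorm a <= M1 * (M2 * cvnorm e2).
  rewrite aE cvnormN; apply: le_trans (hAinv _) _; apply: ler_wpM2l => //.
  apply: le_trans (proj1 (proj_norms Vr _ hV)) _; exact: hH.
have hva := iso_norm Vr a hV.
have ge2 := cvnorm_ge0 e2.
have he : cvnorm e <= (M1 * M2 + 1) * cvnorm e2.
  rewrite {1}ee; apply: le_trans (cvnormD _ _) _; rewrite hva.
  by rewrite mulrDl mul1r -mulrA; apply: lerD ha (lexx _).
split => //.
have t5 : P *m (Lc *m e) = Lc *m e2.
  by rewrite PE t1 mulmxA -hLk -mulmxA -mulmxBr -PE.
have t6 : f *: (Lc *m e2) = P *m ((H + f *: Lc) *m e) - P *m (H *m e).
  by rewrite t3 mulmxDr -scalemxAr t5 addrAC subrr add0r.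
have t7 : cabs f * cvnorm (Lc *m e2) <=
          cvnorm (P *m ((H + f *: Lc) *m e)) + M2 * cvnorm e.
  rewrite -cvnormZ t6; apply: le_trans (cvnormB _ _) _; apply: lerD => //.
  apply: le_trans (Pn _) _; exact: hH.
have t8 : M2 * cvnorm e <= M2 * ((M1 * M2 + 1) * cvnorm e2) by apply: ler_wpM2l.
have t9 : cabs f * (lamk * cvnorm e2) <= cabs f * cvnorm (Lc *m e2).
  by apply: ler_wpM2l; [exact: cabs_ge0 | exact: hlow].
have -> : (cabs f * lamk - M2 - M1 * M2 ^+ 2) * cvnorm e2 =
  cabs f * (lamk * cvnorm e2) - M2 * ((M1 * M2 + 1) * cvnorm e2) by ring.
rewrite lerBlDr; apply: le_trans t9 _; apply: le_trans t7 _; exact: lerD (lexx _) t8.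
Qed.

End Core.

Lemma toC_diag (R : realType) n (d : 'rV[R]_n) :
  toCmx (diag_mx d) = diag_mx (\row_j ((d 0 j)%:C)%C).
Proof.
apply/matrixP => i j; rewrite !mxE; by case: (i == j) => /=; rewrite ?mulr1n ?mulr0n.
Qed.

Theorem theorem1 (R : realType) (n : nat) (k : 'I_n)
    (L : 'M[R]_n) (lam : 'I_n -> R) (V : 'M[R]_n)
    (g : 'I_n -> R[i] -> R[i]) (f : R[i] -> R[i]) (s0 : R[i]) :
  (2 <= n)%N -> (1 <= k)%N ->
  is_graph_laplacian L ->
  ordered_eigendecomp L lam V ->
  (* M_2 finite: every g_i(s0) is invertible *)
  (forall i, g i s0 != 0) ->
  let G := diag_mx (\row_i g i s0) in
  let Ginv := diag_mx (\row_i (g i s0)^-1) in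
  let fs := f s0 in
  let Vk := toCmx (firstcols (ltnW (ltn_ord k)) V) in
  let Lamk := toCmx (diag_mx (\row_(j < k) lam (widen_ord (ltnW (ltn_ord k)) j))) in
  let Ak := Vk^T *m Ginv *m Vk + fs *: Lamk in
  (* M_1 finite: the inner inverse in T_k(s0) exists *)
  Ak \in unitmx ->
  let Tk := Vk *m invmx Ak *m Vk^T in
  let Tyu := invmx (1%:M + fs *: (G *m toCmx L)) *m G in
  let M1 := specnorm Tk in
  let M2 := \big[Num.max/0]_(i < n) cabs ((g i s0)^-1) in
  cabs fs * lam k > M2 + M1 * M2 ^+ 2 ->
  (1%:M + fs *: (G *m toCmx L)) \in unitmx /\
  specnorm (Tyu - Tk) <= (M1 * M2 + 1) ^+ 2 / (cabs fs * lam k - M2 - M1 * M2 ^+ 2).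
Proof.
move=> hn hk1 hL hE hg G Ginv fs Vk Lamk Ak hAu Tk Tyu M1 M2 hden.
case: hE => hmono hVV heig.
pose hk := ltnW (ltn_ord k).
pose Vkr := firstcols hk V.
set Lc := toCmx L.
have hVk : Vkr^T *m Vkr = 1%:M := firstcols_orth hk V hVV.
have hLsym := lap_sym L hL.
have hLk : Lc *m Vk = Vk *m Lamk by rewrite /Lc /Vk /Lamk -!toCM (LVk _ _ _ _ heig).
have hLk' : Vk^T *m Lc = Lamk *m Vk^T.
  have r : Vkr^T *m L = diag_mx (\row_(j < k) lam (widen_ord hk j)) *m Vkr^T.
    by rewrite -{1}hLsym -trmx_mul (LVk _ _ _ _ heig) trmx_mul tr_diag_mx.
  by rewrite /Lc /Vk /Lamk toC_tr -toCM r toCM.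
have hM2 : 0 <= M2 by apply: bigmax_ge_id.
have hH : forall x : 'cV_n, cvnorm (Ginv *m x) <= M2 * cvnorm x.
  move=> x; rewrite -(ger0_norm hM2) -cabs_real -cvnormZ; apply: cvnorm_le => i.
  rewrite /Ginv mul_diag_mx !mxE !cabsM cabs_real ger0_norm //.
  apply: ler_wpM2r; first exact: cabs_ge0.
  exact: (le_bigmax _ (fun i => cabs ((g i s0)^-1)) i).
have hM1 : 0 <= M1 := specnorm_ge0 Tk k.
have hVVc : Vk^T *m Vk = 1%:M := VcTVc Vkr hVk.
have hAinv : forall u, cvnorm (invmx Ak *m u) <= M1 * cvnorm u.
  move=> u; rewrite -(iso_norm Vkr _ hVk) -[in X in _ <= _ * X](iso_norm Vkr u hVk).
  have -> : toCmx Vkr *m (invmx Ak *m u) = Tk *m (Vk *m u).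
    by rewrite /Tk -!mulmxA (mulmxA Vk^T) hVVc mul1mx.
  exact: specnorm_ub.
have hlampos : 0 < lam k.
  rewrite ltNge; apply/negP => hle.
  have h1 := mulr_ge0_le0 (cabs_ge0 fs) hle.
  have h2 : 0 <= M2 + M1 * M2 ^+ 2 by rewrite addr_ge0 // mulr_ge0 // sqr_ge0.
  by have := lt_le_trans (le_lt_trans h2 hden) h1; rewrite ltxx.
have hlow : forall x : 'cV_n, Vk^T *m x = 0 -> lam k * cvnorm x <= cvnorm (Lc *m x).
  move=> x hx.
  have hVVT : V *m V^T = 1%:M := mulmx1C hVV.
  set c := (toCmx V)^T *m x.
  have xc : x = toCmx V *m c by rewrite /c mulmxA toC_tr -toCM hVVT toC1 mul1mx.
  have Lx : Lc *m x = toCmx V *m (toCmx (diag_mx (\row_j lam j)) *m c).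
    by rewrite {1}xc mulmxA /Lc -toCM (LV _ _ _ heig) toCM mulmxA.
  have hci : forall i : 'I_n, (i < k)%N -> c i 0 = 0.
    move=> i hik; rewrite /c mxE; have := congr1 (fun M : 'cV[R[i]]_k => M (Ordinal hik) 0) hx.
    rewrite /= !mxE => h0; apply: (etrans _ h0); apply: eq_bigr => l _; rewrite !mxE.
    by have -> : widen_ord hk (Ordinal hik) = i by apply: val_inj.
  rewrite Lx iso_norm // {1}xc iso_norm //.
  rewrite -(ger0_norm (ltW hlampos)) -cabs_real -cvnormZ; apply: cvnorm_le => i.
  rewrite toC_diag mul_diag_mx !mxE cabsM cabs_real ger0_norm ?(ltW hlampos) //.
  rewrite cabsM cabs_real.
  case: (ltnP i k) => hik.
    have := hci i hik; rewrite /c mxE => ->.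
    by rewrite cabs0 !mulr0.
  apply: ler_wpM2r; first exact: cabs_ge0.
  rewrite ger0_norm; first exact: hmono.
  exact: le_trans (ltW hlampos) (hmono _ _ hik).
have hden' : 0 < cabs fs * lam k - M2 - M1 * M2 ^+ 2.
  by rewrite -addrA -opprD subr_gt0.
set den := cabs fs * lam k - M2 - M1 * M2 ^+ 2 in hden' *.
set N := Ginv + fs *: Lc.
set Mbig := 1%:M + fs *: (G *m toCmx L).
have HG : Ginv *m G = 1%:M.
  rewrite /Ginv /G mulmx_diag; apply/matrixP => i j; rewrite !mxE mulVf //.
have NM : Ginv *m Mbig = N.
  by rewrite /Mbig mulmxDr mulmx1 -scalemxAr mulmxA HG mul1mx.
have CORE := fun e => core _ _ _ _ _ _ _ _ _ _ e hVk hLk hLk' hH hM1 hM2 hAu hAinv hlow.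
set P := 1%:M - Vk *m Vk^T in CORE.
have hMu : Mbig \in unitmx.
  rewrite unitmxE unitfE -det_tr; apply/negP => /det0P [v hv0 hvM].
  have hMv : Mbig *m v^T = 0 by rewrite -[Mbig]trmxK -trmx_mul hvM trmx0.
  have hNv : N *m v^T = 0 by rewrite -NM -mulmxA hMv mulmx0.
  have hz : Vk^T *m (N *m v^T) = 0 by rewrite hNv mulmx0.
  have [c1 c2] := CORE v^T hz.
  rewrite hNv mulmx0 cvnorm0 in c1.
  have hPe : cvnorm (P *m v^T) = 0.
    apply/eqP; rewrite eq_le cvnorm_ge0 andbT.
    by rewrite -(pmulr_rle0 _ hden').
  rewrite hPe mulr0 in c2.
  have : v^T = 0 by apply: cvnorm_eq0; apply/eqP; rewrite eq_le c2 cvnorm_ge0.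
  move=> /(congr1 trmx); rewrite trmxK trmx0 => hv.
  by move: hv0; rewrite hv eqxx.
split => //.
apply: (specnorm_le _ _ k) => y.
set w := invmx Ak *m (Vk^T *m y).
have zE : Tk *m y = Vk *m w by rewrite /Tk /w !mulmxA.
have Nx : N *m (Tyu *m y) = y.
  by rewrite /Tyu -NM !mulmxA -(mulmxA Ginv) mulmxV // mulmx1 HG mul1mx.
have LVw : Lc *m (Vk *m w) = Vk *m (Lamk *m w) by rewrite !mulmxA hLk.
have Nz : Vk^T *m (N *m (Vk *m w)) = Vk^T *m y.
  have Aw : Ak *m w = Vk^T *m y by rewrite /w mulmxA mulmxV // mul1mx.
  rewrite /N mulmxDl -scalemxAl LVw mulmxDr -scalemxAr (mulmxA Vk^T Vk) hVVc mul1mx.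
  by rewrite -Aw /Ak mulmxDl -scalemxAl !mulmxA.
set e := Tyu *m y - Tk *m y.
have eE : (Tyu - Tk) *m y = e by rewrite mulmxBl.
rewrite eE.
have Ne : N *m e = y - N *m (Vk *m w) by rewrite /e mulmxBr Nx zE.
have hz : Vk^T *m (N *m e) = 0 by rewrite Ne mulmxBr Nz subrr.
have [c1 c2] := CORE e hz.
have PVk : P *m Vk = 0.
  by rewrite /P mulmxBl mul1mx -mulmxA hVVc mulmx1 subrr.
have PNe : P *m (N *m e) = P *m (y - Ginv *m (Vk *m w)).
  rewrite Ne /N (mulmxDl Ginv (fs *: Lc)) -scalemxAl LVw opprD addrA (mulmxDr P) mulmxN -scalemxAr.
  by rewrite (mulmxA P Vk) PVk mul0mx scaler0 oppr0 addr0.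
have hPNe : cvnorm (P *m (N *m e)) <= (1 + M1 * M2) * cvnorm y.
  rewrite PNe.
  have hP : cvnorm (P *m (y - Ginv *m (Vk *m w))) <= cvnorm (y - Ginv *m (Vk *m w)).
    by rewrite /P mulmxBl mul1mx -mulmxA; exact: (proj2 (proj_norms Vkr _ hVk)).
  apply: le_trans hP _; apply: le_trans (cvnormB _ _) _.
  have h1 : cvnorm (Ginv *m (Vk *m w)) <= M2 * cvnorm w.
    by apply: le_trans (hH _) _; rewrite iso_norm.
  have h2 : cvnorm w <= M1 * cvnorm y.
    apply: le_trans (hAinv _) _; apply: ler_wpM2l => //.
    exact: (proj1 (proj_norms Vkr _ hVk)).
  have h3 : M2 * cvnorm w <= M2 * (M1 * cvnorm y) by apply: ler_wpM2l.
  rewrite mulrDl mul1r; apply: lerD (lexx _) _; apply: le_trans h1 _.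
  by apply: le_trans h3 _; rewrite mulrA (mulrC M2 M1).
have gy := cvnorm_ge0 y.
have gPe := cvnorm_ge0 (P *m e).
have s1 : den * cvnorm e <= (M1 * M2 + 1) * (den * cvnorm (P *m e)).
  rewrite mulrCA. exact: (ler_wpM2l (ltW hden') c2).
have hMM : 0 <= M1 * M2 + 1 by rewrite addr_ge0 ?mulr_ge0.
have s2 : (M1 * M2 + 1) * (den * cvnorm (P *m e)) <= (M1 * M2 + 1) * ((1 + M1 * M2) * cvnorm y).
  apply: ler_wpM2l => //; exact: le_trans c1 hPNe.
rewrite -(ler_pM2l hden').
have -> : den * ((M1 * M2 + 1) ^+ 2 / den * cvnorm y) = (M1 * M2 + 1) * ((1 + M1 * M2) * cvnorm y).
  by field; rewrite gt_eqF.
exact: le_trans s1 s2.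
Qed.
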